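(* In Algorithm MV (see context), if the binary BA decision (the output of the binary BA run in step (3)) is $\mathit{false}$, then WHP every correct process receives a message $\langle\textsc{converge},\mathit{true},QC_v\rangle_j$ from some validly sampled process $p_j$.
   Context: System and adversary: a well-known static set $\Pi$ of $n$ processes; an adversary may adaptively corrupt up to $f=(\frac13-\epsilon)n$ processes during a run, where $\frac{1}{2\ln n}<\epsilon<\frac13$. Corrupted (Byzantine) processes may deviate arbitrarily; uncorrupted processes are correct. Once the adversary corrupts a process it cannot replace messages that process already sent while correct. Every pair of processes is connected by a reliable authenticated link; the network is asynchronous. There is a trusted PKI; the adversary is computationally bounded; $\langle v\rangle_i$ denotes $v$ signed by $p_i$. Validated committee sampling: each $p_i$ has a private function $\mathit{sample}_i(s,\lambda)$ returning $\langle v_i,\sigma_i\rangle$ with $v_i\in\{\mathit{true},\mathit{false}\}$ ($p_i$ is ''sampled'' iff $v_i=\mathit{true}$, probability $\lambda/n$) and an unforgeable publicly verifiable proof $\sigma_i$; ''validly sampled $p_j$'' means the message carries a valid such proof. Let $C(s,\lambda)$ be the committee for $s,\lambda$. Parameters: $\lambda=8\ln n$; $\frac1\lambda<d<\frac\epsilon3-\frac1{3\lambda}$; $W=\lceil(\frac23+3d)\lambda\rceil$, $B=\lfloor(\frac13-d)\lambda\rfloor$. Assumed WHP for each committee: (S3) at least $W$ members are correct; (S4) at most $B$ members are Byzantine; (S5) any two $W$-subsets of the committee intersect in at least $B+1$ processes. WHP means with probability tending to $1$ as $n\to\infty$. The binary BA used is a black-box Binary Strong BA WHP: WHP strong unanimity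 (if all correct processes propose the same bit, any deciding correct process decides it), agreement, and termination. Algorithm MV (code for $p_i$ with input $v_i$; local: $\mathit{count}=0$, empty sets $\mathit{init\text{-}set},\mathit{init\text{-}values\text{-}set},\mathit{converge\text{-}set}$): (1) If $p_i$ is sampled for $(\textsc{init},\lambda)$, broadcast $\langle\textsc{init},v_i\rangle_i$. (2) On receiving $\langle\textsc{init},v_j\rangle_j$ from validly sampled $p_j$: add $j$ to $\mathit{init\text{-}set}$, $v_j$ to $\mathit{init\text{-}values\text{-}set}$. If $p_i$ is sampled for $(\textsc{converge},\lambda)$ and $|\mathit{init\text{-}set}|=W$ for the first time: if $\mathit{init\text{-}values\text{-}set}=\{v_i\}$, batch the $W$ signed \textsc{init} messages into $QC_{v_i}$ and send $\langle\textsc{converge},\mathit{true},QC_{v_i}\rangle_i$ to all; else send $\langle\textsc{converge},\mathit{false},\bot\rangle_i$ to all. (3) On receiving $\langle\textsc{converge},\mathit{is\_content},QC_v\rangle_j$ from validly sampled $p_j$: add $j$ to $\mathit{converge\text{-}set}$; if $\mathit{is\_content}=\mathit{true}$ increment $\mathit{count}$. When $|\mathit{converge\text{-}set}|=W$ for the first time: $\mathit{alert}\gets(\mathit{count}<B+1)$; run binary BA on $\mathit{alert}$; if the output is $\mathit{true}$ decide $\bot$; else wait for some $\langle\textsc{converge},\mathit{true},QC_v\rangle_j$ from a validly sampled $p_j$ and decide $v$. A valid $QC_v$ consists of $W$ signed \textsc{init} messages on $v$ from $W$ distinct validly sampled processes. *)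

(* Defs.v *)
From HB Require Import structures.
From mathcomp Require Import all_boot all_order all_algebra.
From mathcomp Require Import all_classical all_reals all_analysis.
Set Implicit Arguments. Unset Strict Implicit. Unset Printing Implicit Defensive.
Import Order.TTheory GRing.Theory Num.Theory.
Local Open Scope ring_scope.

Inductive seed := INIT | CONVERGE.

Section Model.
Variables (n : nat) (V : eqType).

(* Message payloads.  [MInit v] is <INIT,v>;  [MConv b q] is
   <CONVERGE, b, q>, where the quorum certificate q is the batch of
   signed INIT messages, represented by their (signer, value) pairs;
   bottom is the empty batch. The sender's signature / sampling proof is
   modelled by the authenticated sender field of a receipt. *)
Inductive msg :=
  | MInit of V
  | MConv of bool & seq ('I_n * V).

Record run := Run {
  corrupt : {set 'I_n};              (* processes corrupted at some point *)
  input : 'I_n -> V;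
  sampled : seed -> 'I_n -> bool;     (* first component of sample_i(s,lambda) *)
  signs_init : 'I_n -> V -> bool;
  sent : 'I_n -> 'I_n -> msg -> Prop; (* sent j k m : p_j sent m to p_k *)
  recv : 'I_n -> nat -> option ('I_n * msg);
     (* recv i t = Some (j, m) : the t-th receive event of p_i delivers m
        authenticated as coming from p_j (None: no receipt in slot t) *)
  ba_prop : 'I_n -> option bool;
  ba_dec : 'I_n -> option bool
}.

Variable r : run.

Definition correct (i : 'I_n) : bool := i \notin corrupt r.
Definition committee (s : seed) : {set 'I_n} := [set i | sampled r s i].

Definition init_of (e : option ('I_n * msg)) : option ('I_n * V) :=
  if e is Some (j, MInit v) then
    if sampled r INIT j then Some (j, v) else None
  else None.

Definition conv_of (e : option ('I_n * msg)) : option ('I_n * bool) :=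
  if e is Some (j, MConv b _) then
    if sampled r CONVERGE j then Some (j, b) else None
  else None.

(* processed INIT messages among the first t receive events of p_i
   (one per sender: later duplicates from the same sender are ignored);
   map fst = init-set, map snd = init-values-set (with multiplicity). *)
Fixpoint inits_upto (i : 'I_n) (t : nat) : seq ('I_n * V) :=
  match t with
  | 0 => [::]
  | t'.+1 =>
    let s := inits_upto i t' in
    match init_of (recv r i t') with
    | Some (j, v) => if j \in map fst s then s else rcons s (j, v)
    | None => s
    end
  end.

Fixpoint convs_upto (i : 'I_n) (t : nat) : seq ('I_n * bool) :=
  match t with
  | 0 => [::]
  | t'.+1 =>
    let s := convs_upto i t' in
    match conv_of (recv r i t') with
    | Some (j, b) => if j \in map fst s then s else rcons s (j, b)
    | None => s
    end
  end.

(* |init-set| = W for the first time when processing receive event t *)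
Definition init_reach (W : nat) (i : 'I_n) (t : nat) : Prop :=
  (size (inits_upto i t) < W)%N /\ size (inits_upto i t.+1) = W.

Definition conv_reach (W : nat) (i : 'I_n) (t : nat) : Prop :=
  (size (convs_upto i t) < W)%N /\ size (convs_upto i t.+1) = W.

Definition conv_count (i : 'I_n) (t : nat) : nat :=
  count (fun p => p.2) (convs_upto i t).

(* the CONVERGE message sent in step (2) given the processed INIT batch *)
Definition conv_msg (i : 'I_n) (s : seq ('I_n * V)) : msg :=
  if undup (map snd s) == [:: input r i] then MConv true s
  else MConv false [::].

(* what a correct process sends, according to steps (1) and (2) *)
Definition protocol_send (W : nat) (i k : 'I_n) (m : msg) : Prop :=
  (sampled r INIT i /\ m = MInit (input r i)) \/
  (sampled r CONVERGE i /\
   exists t, init_reach W i t /\ m = conv_msg i (inits_upto i t.+1)).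

Definition valid_run (W B : nat) : Prop :=
  [/\
      forall i k m, correct i -> (sent r i k m <-> protocol_send W i k m),
      forall i v, correct i -> (signs_init r i v = sampled r INIT i && (v == input r i)),
      forall j k v, sent r j k (MInit v) -> signs_init r j v &
      (* authenticated links *)
      forall i t j m, recv r i t = Some (j, m) -> sent r j i m] /\
  [/\ (* reliable links: every message sent to a correct process is delivered *)
      (forall j i m, correct i -> sent r j i m -> exists t, recv r i t = Some (j, m)) &
      (* step (3): correct processes run BA on alert = (count < B+1) when
         |converge-set| = W for the first time, and only then *)
      (forall i, correct i ->
        (forall t, conv_reach W i t ->
            ba_prop r i = Some (conv_count i t.+1 < B.+1)%N) /\
        (ba_prop r i <> None -> exists t, conv_reach W i t))].

(* properties (S3), (S4), (S5) of committee C(s,lambda) *)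
Definition committee_ok (W B : nat) (s : seed) : Prop :=
  [/\ (W <= #|[set i in committee s | correct i]|)%N,
      (#|[set i in committee s | ~~ correct i]| <= B)%N &
      forall X Y : {set 'I_n}, X \subset committee s -> Y \subset committee s ->
        #|X| = W -> #|Y| = W -> (B < #|X :&: Y|)%N].

(* Binary Strong BA: strong unanimity, agreement, termination *)
Definition ba_ok : Prop :=
  [/\ forall b, (forall i, correct i -> ba_prop r i = Some b) ->
        forall i, correct i -> ba_dec r i <> None -> ba_dec r i = Some b,
      forall i k b1 b2, correct i -> correct k ->
        ba_dec r i = Some b1 -> ba_dec r k = Some b2 -> b1 = b2 &
      (forall i, correct i -> ba_prop r i <> None) ->
        forall i, correct i -> ba_dec r i <> None].

Definition valid_QC (W : nat) (v : V) (q : seq ('I_n * V)) : Prop :=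
  [/\ size q = W, uniq (map fst q) &
      all (fun p => [&& sampled r INIT p.1, p.2 == v & signs_init r p.1 v]) q].

Definition ba_decides_false : Prop :=
  exists i, correct i /\ ba_dec r i = Some false.

Definition receives_conv_true (W : nat) (i : 'I_n) : Prop :=
  exists t j v q, recv r i t = Some (j, MConv true q) /\
    sampled r CONVERGE j /\ valid_QC W v q.

End Model.

Section Params.
Variable R : realType.
Definition lambda_of (n : nat) : R := 8 * ln (n%:R : R).
Definition W_of (d lam : R) : nat := `|Num.ceil ((2/3 + 3 * d) * lam)|%N.
Definition B_of (d lam : R) : nat := `|Num.floor ((1/3 - d) * lam)|%N.
End Params.

(* Main.v *)
Require Import Defs.
From HB Require Import structures.
From mathcomp Require Import all_boot all_order all_algebra.
From mathcomp Require Import all_classical all_reals all_analysis.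
From mathcomp Require Import lra.
Import Order.TTheory GRing.Theory Num.Theory numFieldNormedType.Exports.
Set Implicit Arguments. Unset Strict Implicit.

Section Acc.
Variables (I X : eqType) (g : nat -> option (I * X)).
Fixpoint acc t : seq (I * X) := match t with 0 => [::] | t'.+1 => let s := acc t' in
  match g t' with Some (j, v) => if j \in map fst s then s else rcons s (j, v) | None => s end end.

Lemma acc_uniq t : uniq (map fst (acc t)).
Proof.
elim: t => //= t IH; case: (g t) => [[j v]|] //; case: ifP => // hj.
by rewrite map_rcons rcons_uniq hj IH.
Qed.

Lemma acc_size t : (size (acc t.+1) <= (size (acc t)).+1)%N.
Proof.
rewrite /=; case: (g t) => [[j v]|] //; case: ifP => //; by rewrite size_rcons.
Qed.

Lemma acc_step t : {subset acc t <= acc t.+1}.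
Proof.
move=> p hp /=; case: (g t) => [[j v]|] //; case: ifP => // _.
by rewrite mem_rcons inE hp orbT.
Qed.

Lemma acc_mono t t' : (t <= t')%N -> {subset acc t <= acc t'}.
Proof.
move/subnK <-; elim: (t' - t)%N => [|k IH] p hp //=.
by apply: (acc_step (t := (k + t)%N)); apply: IH.
Qed.

Lemma acc_mem t j x : g t = Some (j, x) -> j \in map fst (acc t.+1).
Proof.
move=> /= ->; case: ifP => // _; by rewrite map_rcons mem_rcons inE eqxx.
Qed.

Lemma acc_in t p : p \in acc t -> exists t', (t' < t)%N /\ g t' = Some p.
Proof.
elim: t => //= t IH; case E: (g t) => [[j v]|]; last first.
  by move/IH => [t' [h1 h2]]; exists t'; split => //; apply: ltnW.
case: ifP => _.
  by move/IH => [t' [h1 h2]]; exists t'; split => //; apply: ltnW.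
rewrite mem_rcons inE => /orP [/eqP ->|]; first by exists t.
by move/IH => [t' [h1 h2]]; exists t'; split => //; apply: ltnW.
Qed.

Lemma acc_reach W T : (0 < W)%N -> (W <= size (acc T))%N ->
  exists t, (size (acc t) < W)%N /\ size (acc t.+1) = W.
Proof.
move=> W0; elim: T => [|T IH] h; first by rewrite /= leqn0 in h; rewrite (eqP h) in W0.
case: (leqP W (size (acc T))) => h2; first exact: IH.
exists T; split => //; apply/eqP; rewrite eqn_leq h andbT.
by apply: leq_trans (acc_size T) _.
Qed.

Lemma acc_cover (s : seq I) : (forall j, j \in s -> exists t x, g t = Some (j, x)) ->
  exists T, {subset s <= map fst (acc T)}.
Proof.
elim: s => [|a s IH] h; first by exists 0%N.
have [T hT] : exists T, {subset s <= map fst (acc T)}.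
  by apply: IH => j hj; apply: h; rewrite inE hj orbT.
have [t [x hx]] := h a (mem_head _ _).
exists (maxn T t.+1) => j; rewrite inE => /orP [/eqP ->|hj].
  have /mapP [p hp ->] := acc_mem hx; apply: map_f.
  by apply: (acc_mono (leq_maxr _ _)).
have /mapP [p hp ->] := hT _ hj; apply: map_f.
by apply: (acc_mono (leq_maxl _ _)).
Qed.
End Acc.

Lemma acc_reach_set (n : nat) (X : eqType) (g : nat -> option ('I_n * X)) (S : {set 'I_n}) W :
  (0 < W)%N -> (W <= #|S|)%N -> (forall j, j \in S -> exists t x, g t = Some (j, x)) ->
  exists t, (size (acc g t) < W)%N /\ size (acc g t.+1) = W.
Proof.
move=> W0 hW h.
have [T hT] : exists T, {subset enum S <= map fst (acc g T)}.
  by apply: acc_cover => j; rewrite mem_enum; apply: h.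
apply: (acc_reach (T := T)) => //; apply: leq_trans hW _.
rewrite cardE -(size_map fst); apply: uniq_leq_size => //; first exact: enum_uniq.
Qed.

Lemma inits_acc n V (r : run n V) i t : inits_upto r i t = acc (fun t => init_of r (recv r i t)) t.
Proof. by elim: t => //= t ->. Qed.
Lemma convs_acc n V (r : run n V) i t : convs_upto r i t = acc (fun t => conv_of r (recv r i t)) t.
Proof. by elim: t => //= t ->. Qed.
Lemma det n V (r : run n V) W B : (0 < W)%N -> valid_run r W B ->
  committee_ok r W B INIT -> committee_ok r W B CONVERGE -> ba_ok r ->
  ba_decides_false r -> forall i, correct r i -> receives_conv_true r W i.
Proof.
move=> W0 [[hsend hsign hsig hauth] [hdel hba]] [hI3 _ _] [hC3 hC4 _] [hU _ _] [i0 [ci0 di0]].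
have stepA : forall k, correct r k -> exists t, init_reach r W k t.
  move=> k ck; rewrite /init_reach.
  have cov : forall j, j \in [set i in committee r INIT | correct r i] ->
      exists t x, init_of r (recv r k t) = Some (j, x).
    move=> j; rewrite inE => /andP []; rewrite inE => sj cj.
    have /hdel : sent r j k (MInit _ (input r j)).
      by apply/(hsend _ _ _ cj); left.
    move=> /(_ ck) [t ht]; exists t, (input r j); by rewrite /init_of ht sj.
  have [t [h1 h2]] := acc_reach_set W0 hI3 cov.
  by exists t; rewrite !inits_acc.
have stepB : forall k, correct r k -> exists t, conv_reach r W k t.
  move=> k ck; rewrite /conv_reach.
  have cov : forall j, j \in [set i in committee r CONVERGE | correct r i] ->
      exists t x, conv_of r (recv r k t) = Some (j, x).
    move=> j; rewrite inE => /andP []; rewrite inE => sj cj.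
    have [tj hj] := stepA j cj.
    have /hdel : sent r j k (conv_msg r j (inits_upto r j tj.+1)).
      by apply/(hsend _ _ _ cj); right; split => //; exists tj.
    move=> /(_ ck) [t ht]; rewrite /conv_msg in ht.
    case: ifP ht => _ ht.
      by exists t, true; rewrite /conv_of ht sj.
    by exists t, false; rewrite /conv_of ht sj.
  have [t [h1 h2]] := acc_reach_set W0 hC3 cov.
  by exists t; rewrite !convs_acc.
have [k0 [ck0 [t0 [ht0 hc0]]]] : exists k0, correct r k0 /\ exists t, conv_reach r W k0 t /\
    ~~ (conv_count r k0 t.+1 < B.+1)%N.
  apply: contrapT => hn.
  have : ba_dec r i0 = Some true.
    apply: (hU true) => //; last by rewrite di0.
    move=> k ck; have [t ht] := stepB k ck.
    rewrite ((hba k ck).1 t ht); congr Some.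
    apply: contrapT => /negP hf; apply: hn; exists k; split => //; exists t; split => //.
  by rewrite di0.
have conv_src : forall k t p, p \in convs_upto r k t -> exists t' q,
    recv r k t' = Some (p.1, MConv p.2 q) /\ sampled r CONVERGE p.1.
  move=> k t p; rewrite convs_acc => /acc_in [t' [_ ht']].
  move: ht'; rewrite /conv_of; case E: (recv r k t') => [[j' m]|] //.
  move: E; case: m => // b q E; case: ifP => // sj; case=> <-; by exists t', q.
set s := convs_upto r k0 t0.+1.
have us : uniq (map fst s) by rewrite /s convs_acc; apply: acc_uniq.
set L := map fst (seq.filter (fun p => p.2) s).
have uL : uniq L.
  apply: (seq.subseq_uniq _ us); apply: map_subseq; apply: filter_subseq.
have [j [cj hj]] : exists j, correct r j /\ (j, true) \in s.
  case: (boolP (has (correct r) L)).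
    move=> /hasP [j /mapP [pp hp ->] cj]; exists pp.1; split => //.
    move: hp; rewrite mem_filter => /andP [p2 hp].
    by move: p2 hp cj; case: pp => a [].
  move=> hn; exfalso.
  have : (size L <= #|[set i in committee r CONVERGE | ~~ correct r i]|)%N.
    rewrite cardE; apply: uniq_leq_size => //.
    move=> j hjL; rewrite mem_enum inE; apply/andP; split.
      move: hjL => /mapP [pp hp ->]; move: hp; rewrite mem_filter => /andP [_ hp].
      have [t' [q [_ hs]]] := conv_src _ _ _ hp; by rewrite inE.
    by apply: contra hn => cj; apply/hasP; exists j.
  rewrite size_map size_filter => hle.
  move: hc0; rewrite /conv_count -leqNgt => hc0.
  have := leq_trans hc0 (leq_trans hle hC4); by rewrite ltnn.
have [t1 [q [hr1 sj]]] := conv_src _ _ _ hj; rewrite /= in hr1 sj.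
have := hauth _ _ _ _ hr1; move/(hsend _ _ _ cj).
case => [[_ //]|[_ [tj [hrj]]]].
rewrite /conv_msg; case: ifP => // hund [] hq.
have {}hq : q = inits_upto r j tj.+1 := hq.
have vq : valid_QC r W (input r j) q.
  rewrite hq; split; first by case: hrj.
    by rewrite inits_acc; apply: acc_uniq.
  apply/allP => p hp; rewrite inits_acc in hp.
  have [t' [_ ht']] := acc_in hp.
  move: ht'; rewrite /init_of; case E: (recv r j t') => [[j' m]|] //.
  move: E; case: m => // v E; case: ifP => // sj'; case=> hp'.
  have pv : p.2 = input r j.
    have : p.2 \in [seq i.2 | i <- inits_upto r j tj.+1].
      by apply: map_f; rewrite inits_acc.
    by rewrite -mem_undup (eqP hund) inE => /eqP.
  rewrite -hp' /= sj' /=; rewrite -hp' /= in pv; rewrite pv eqxx /=.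
  rewrite -pv; apply: (hsig _ j); apply: (hauth _ t'); by rewrite E.
move=> i ci.
have : sent r j i (MConv true q).
  apply/(hsend _ _ _ cj); right; split => //; exists tj; split => //.
  by rewrite /conv_msg hund hq.
move=> /(hdel _ _ _ ci) [t hi].
by exists t, j, (input r j), q.
Qed.
Unset Implicit Arguments.
Local Open Scope classical_set_scope.
Local Open Scope ring_scope.

Lemma cvg_setI (R : realType) dsp (Omega : nat -> measurableType dsp)
  (P : forall n, probability (Omega n) R) (A B : forall n, set (Omega n)) :
  (forall n, measurable (A n)) -> (forall n, measurable (B n)) ->
  (P n (A n)) @[n --> \oo] --> 1%E -> (P n (B n)) @[n --> \oo] --> 1%E ->
  (P n (A n `&` B n)) @[n --> \oo] --> 1%E.
Proof.
move=> mA mB hA hB.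
have fin n (X : set (Omega n)) : measurable X -> P n X \is a fin_num.
  by move=> mX; rewrite fin_num_measure.
have E n (X : set (Omega n)) : measurable X -> P n X = (fine (P n X))%:E.
  by move=> mX; rewrite fineK // fin.
have mI n : measurable (A n `&` B n) by apply: measurableI.
move/fine_cvgP: hA => [_ hA]; move/fine_cvgP: hB => [_ hB].
apply/fine_cvgP; split; first by apply: nearW => n; apply: fin.
apply: (@squeeze_cvgr _ _ _ _ (fun n => fine (P n (A n)) + fine (P n (B n)) - 1) (fun=> 1)).
- apply: nearW => n /=; apply/andP; split; last first.
    have := probability_le1 (P n) (mI n); rewrite E // lee_fin //.
  have h1 : (P n (~` (A n `&` B n)) <= P n (~` A n) + P n (~` B n))%E.
    by rewrite setCI; exact: (measureU2 (P n) (measurableC (mA n)) (measurableC (mB n))).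
  rewrite !probability_setC // in h1.
  move: h1; rewrite (E _ _ (mA n)) (E _ _ (mB n)) (E _ _ (mI n)).
  rewrite -!EFinB -EFinD lee_fin => h; lra.
- have h : (fun n => fine (P n (A n)) + fine (P n (B n)) - 1) @ \oo --> (1 + 1 - 1 : R).
    by apply: cvgB; [apply: cvgD; [exact: hA|exact: hB]|apply: cvg_cst].
  by rewrite (_ : 1 + 1 - 1 = 1) in h; [exact: h|lra].
- exact: cvg_cst.
Qed.

Lemma cvg_ev (R : realType) dsp (Omega : nat -> measurableType dsp)
  (P : forall n, probability (Omega n) R) (X : forall n, set (Omega n)) M :
  (P n (X n)) @[n --> \oo] --> 1%E ->
  (P n (if (M <= n)%N then X n else set0)) @[n --> \oo] --> 1%E.
Proof.
move=> h; apply: cvg_trans h; apply: near_eq_cvg.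
near=> n; have -> // : (M <= n)%N.
by near: n; exists M.
Unshelve. all: by end_near.
Qed.

Lemma W_pos (R : realType) (n : nat) (d : R) : (2 <= n)%N ->
  1 / lambda_of R n < d -> (0 < W_of d (lambda_of R n))%N.
Proof.
move=> n2 hd; rewrite /W_of absz_gt0.
have lam : 0 < lambda_of R n.
  by rewrite /lambda_of mulr_gt0 // ln_gt0 // ltr1n.
have d0 : 0 < d by apply: lt_trans hd; rewrite divr_gt0.
rewrite gt_eqF // ceil_gt0 mulr_gt0 //; lra.
Qed.

Theorem mainTheorem3 (R : realType) (V : eqType) (dsp : measure_display)
  (Omega : nat -> measurableType dsp)
  (P : forall n, probability (Omega n) R)
  (eps d : nat -> R)
  (run_of : forall n, Omega n -> run n V) :
  (exists N, forall n, (N <= n)%N ->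
     [/\ 1 / (2 * ln (n%:R : R)) < eps n < 1 / 3,
         1 / lambda_of R n < d n < eps n / 3 - 1 / (3 * lambda_of R n),
         (forall (s : seed) (i : 'I_n),
            measurable [set w | sampled (run_of n w) s i] /\
            P n [set w | sampled (run_of n w) s i] = (lambda_of R n / n%:R)%:E),
         (forall w, valid_run (run_of n w)
                      (W_of (d n) (lambda_of R n)) (B_of (d n) (lambda_of R n))) &
         (forall w, (#|corrupt (run_of n w)|%:R <= (1 / 3 - eps n) * n%:R :> R))]) ->
  (forall s : seed, exists G : forall n, set (Omega n),
     (forall n, measurable (G n)) /\
     (P n (G n)) @[n --> \oo] --> 1%E /\
     (forall n w, G n w -> committee_ok (run_of n w)
                   (W_of (d n) (lambda_of R n)) (B_of (d n) (lambda_of R n)) s)) ->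
  (exists G : forall n, set (Omega n),
     (forall n, measurable (G n)) /\
     (P n (G n)) @[n --> \oo] --> 1%E /\
     (forall n w, G n w -> ba_ok (run_of n w))) ->
  exists G : forall n, set (Omega n),
     (forall n, measurable (G n)) /\
     (P n (G n)) @[n --> \oo] --> 1%E /\
     (forall n w, G n w -> ba_decides_false (run_of n w) ->
        forall i, correct (run_of n w) i ->
          receives_conv_true (run_of n w) (W_of (d n) (lambda_of R n)) i).
Proof.
move=> [N hN] hcom [G3 [m3 [c3 h3]]].
have [G1 [m1 [c1 h1]]] := hcom INIT.
have [G2 [m2 [c2 h2]]] := hcom CONVERGE.
exists (fun n => if (maxn N 2 <= n)%N then G1 n `&` G2 n `&` G3 n else set0).
split; [|split].
- move=> n; case: ifP => _; last exact: measurable0.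
  by apply: measurableI => //; apply: measurableI.
- apply: cvg_ev; apply: cvg_setI => //; first by move=> n; apply: measurableI.
  exact: cvg_setI.
- move=> n w; case: ifP => // hn [[g1 g2] g3].
  rewrite geq_max in hn; case/andP: hn => hNn h2n.
  have [_ /andP [hd _] _ hv _] := hN n hNn.
  apply: det; [exact: W_pos|exact: hv|exact: h1|exact: h2|exact: h3].
Qed.
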